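(* Let $l_1(\Gamma, \alpha, \mathcal{A})$ be the set of all families $a = \{a_g\}_{g \in \Gamma}$ of elements of $\mathcal{A}$ such that $a_x \in \mathcal{A}\alpha_x(1)$ and $a_{-x} \in \alpha_x(1)\mathcal{A}$ for all $x \in \Gamma^+$, and $\sum_{g \in \Gamma} \|a_g\| < \infty$, normed by $\|a\| = \sum_{g\in\Gamma}\|a_g\|$. For $a, b \in l_1(\Gamma, \alpha, \mathcal{A})$ define $a\cdot b$ by $$(a \cdot b)_g := \begin{cases} \sum_{\substack{g=x-y \\ x,y>0}} a_x \alpha_{x-y}(b_{-y}) + \sum_{\substack{g=y-x \\ x,y>0}} L_x(a_{-x} b_y) + \sum_{\substack{g=x+y \\ x,y \geq 0}} a_x \alpha_x(b_y), & \text{if } 0 \leq g, \\ \sum_{\substack{g=x-y \\ x,y>0}} \alpha_{y-x}(a_x) b_{-y} + \sum_{\substack{g=y-x \\ x,y>0}} L_y(a_{-x} b_y) + \sum_{\substack{g=-x-y \\ x,y \geq 0}} \alpha_y(a_{-x}) b_{-y}, & \text{if } g < 0, \end{cases}$$ where $x, y$ run through $\Gamma^+$. Then this multiplication is well defined (i.e. $a\cdot b \in l_1(\Gamma,\alpha,\mathcal{A})$), and $\|a \cdot b\| \leq \|a\| \cdot \|b\|$ for all $a, b \in l_1(\Gamma, \alpha, \mathcal{A})$.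
   Context: $\mathcal{A}$ is a C*-algebra with identity $1$, $\Gamma$ is a totally ordered abelian group with identity $0$ and positive cone $\Gamma^+ = \{x \in \Gamma: 0 \le x\}$, and $\alpha: \Gamma^+ \to \mathrm{End}(\mathcal{A})$ is a semigroup homomorphism ($\alpha_0 = \mathrm{Id}$, $\alpha_x\circ\alpha_y = \alpha_{x+y}$) by *-endomorphisms. The system $(\mathcal{A}, \Gamma^+, \alpha)$ is assumed finely representable, equivalently there is a (unique) complete transfer action $L$: continuous linear positive maps $L_x:\mathcal{A}\to\mathcal{A}$, $x\in\Gamma^+$, with $L_{x+y} = L_y \circ L_x$, $L_x(\alpha_x(a)b) = aL_x(b)$ and $\alpha_x(L_x(a)) = \alpha_x(1)a\alpha_x(1)$ for all $a,b\in\mathcal{A}$, $x,y\in\Gamma^+$. *)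

(* Defs.v *)
From mathcomp Require Import all_boot all_order all_algebra.
From mathcomp Require Import complex.
From mathcomp Require Import all_classical all_reals esum.
Set Implicit Arguments.
Unset Strict Implicit.
Unset Printing Implicit Defensive.
Import Order.TTheory GRing.Theory Num.Theory.
Local Open Scope ring_scope.
Local Open Scope classical_set_scope.

Record is_cstar (R : realType) (A : algType R[i]) (nrm : A -> R)
    (star : A -> A) : Prop := {
  cs_nrm_eq0 : forall a, nrm a = 0 -> a = 0;
  cs_nrmD : forall a b, nrm (a + b) <= nrm a + nrm b;
  cs_nrmZ : forall (c : R[i]) a, nrm (c *: a) = ComplexField.Normc.normc c * nrm a;
  cs_nrmM : forall a b, nrm (a * b) <= nrm a * nrm b;
  cs_complete : forall u : nat -> A,
      (forall e, 0 < e -> exists N, forall m n, (N <= m)%N -> (N <= n)%N ->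
           nrm (u m - u n) < e) ->
      exists l, forall e, 0 < e -> exists N, forall n, (N <= n)%N -> nrm (u n - l) < e;
  cs_starD : forall a b, star (a + b) = star a + star b;
  cs_starZ : forall (c : R[i]) a, star (c *: a) = c^* *: star a;
  cs_starM : forall a b, star (a * b) = star b * star a;
  cs_starK : forall a, star (star a) = a;
  cs_cstar_id : forall a, nrm (star a * a) = nrm a ^+ 2
}.

Definition cpos (R : realType) (A : algType R[i]) (star : A -> A) (a : A) : Prop :=
  exists b, a = star b * b.

Record is_star_endo (R : realType) (A : algType R[i]) (star : A -> A)
    (f : A -> A) : Prop := {
  se_add : forall a b, f (a + b) = f a + f b;
  se_scale : forall (c : R[i]) a, f (c *: a) = c *: f a;
  se_mul : forall a b, f (a * b) = f a * f b;
  se_star : forall a, f (star a) = star (f a)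
}.

Record is_toag (G : zmodType) (le : rel G) : Prop := {
  tg_refl : forall x, le x x;
  tg_anti : forall x y, le x y -> le y x -> x = y;
  tg_trans : forall x y z, le x y -> le y z -> le x z;
  tg_total : forall x y, le x y || le y x;
  tg_transl : forall x y z, le x y -> le (x + z) (y + z)
}.

Definition glt (G : zmodType) (le : rel G) (x y : G) : Prop := le x y /\ x <> y.

(* alpha and L are given as functions on the whole of G, but only     *)
(* their values on Gamma^+ = {x | le 0 x} are constrained / used.     *)
Record is_endo_action (R : realType) (A : algType R[i]) (star : A -> A)
    (G : zmodType) (le : rel G) (alpha : G -> A -> A) : Prop := {
  ea_endo : forall x, le 0 x -> is_star_endo star (alpha x);
  ea_zero : forall a, alpha 0 a = a;
  ea_comp : forall x y, le 0 x -> le 0 y -> forall a, alpha x (alpha y a) = alpha (x + y) a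
}.

Record is_transfer_action (R : realType) (A : algType R[i]) (nrm : A -> R)
    (star : A -> A) (G : zmodType) (le : rel G) (alpha L : G -> A -> A) : Prop := {
  ta_add : forall x, le 0 x -> forall a b, L x (a + b) = L x a + L x b;
  ta_scale : forall x, le 0 x -> forall (c : R[i]) a, L x (c *: a) = c *: L x a;
  ta_cont : forall x, le 0 x -> exists K : R, forall a, nrm (L x a) <= K * nrm a;
  ta_pos : forall x, le 0 x -> forall a, cpos star a -> cpos star (L x a);
  ta_comp : forall x y, le 0 x -> le 0 y -> forall a, L (x + y) a = L y (L x a);
  ta_module : forall x, le 0 x -> forall a b, L x (alpha x a * b) = a * L x b;
  ta_cond : forall x, le 0 x -> forall a,
      alpha x (L x a) = alpha x 1 * a * alpha x 1
}.

(* Unconditional summation of a family indexed by {i | P i} in a      *)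
(* normed group: the net of finite partial sums converges to s.       *)
Definition has_sum (R : realType) (V : zmodType) (nrm : V -> R) (I : eqType)
    (P : I -> Prop) (f : I -> V) (s : V) : Prop :=
  forall e : R, 0 < e -> exists F0 : seq I, (forall i, i \in F0 -> P i) /\
    forall F : seq I, uniq F -> (forall i, i \in F -> P i) -> {subset F0 <= F} ->
      nrm (\sum_(i <- F) f i - s) < e.

Definition summable (R : realType) (V : zmodType) (nrm : V -> R) (I : eqType)
    (P : I -> Prop) (f : I -> V) : Prop := exists s, has_sum nrm P f s.

(* the value of the sum (0 if the family is not summable) *)
Definition fsum (R : realType) (V : zmodType) (nrm : V -> R)
    (I : eqType) (P : I -> Prop) (f : I -> V) : V :=
  if pselect (summable nrm P f) is left h then projT1 (cid h) else 0.

Definition l1norm (R : realType) (A : algType R[i]) (nrm : A -> R)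
    (G : zmodType) (a : G -> A) : \bar R :=
  \esum_(g in [set: G]) (nrm (a g))%:E.

Definition in_l1 (R : realType) (A : algType R[i]) (nrm : A -> R)
    (G : zmodType) (le : rel G) (alpha : G -> A -> A) (a : G -> A) : Prop :=
  (forall x, le 0 x ->
     (exists c, a x = c * alpha x 1) /\ (exists c, a (- x) = alpha x 1 * c)) /\
  (l1norm nrm a < +oo)%E.

Section Series.
Context (R : realType) (A : algType R[i]) (G : zmodType) (le : rel G)
  (alpha L : G -> A -> A) (a b : G -> A) (g : G).

Definition dom1 (p : G * G) : Prop :=
  [/\ glt le 0 p.1, glt le 0 p.2 & g = p.1 - p.2].
Definition ser1 (p : G * G) : A := a p.1 * alpha (p.1 - p.2) (b (- p.2)).
Definition dom2 (p : G * G) : Prop :=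
  [/\ glt le 0 p.1, glt le 0 p.2 & g = p.2 - p.1].
Definition ser2 (p : G * G) : A := L p.1 (a (- p.1) * b p.2).
Definition dom3 (p : G * G) : Prop :=
  [/\ le 0 p.1, le 0 p.2 & g = p.1 + p.2].
Definition ser3 (p : G * G) : A := a p.1 * alpha p.1 (b p.2).
Definition ser4 (p : G * G) : A := alpha (p.2 - p.1) (a p.1) * b (- p.2).
Definition ser5 (p : G * G) : A := L p.2 (a (- p.1) * b p.2).
Definition dom6 (p : G * G) : Prop :=
  [/\ le 0 p.1, le 0 p.2 & g = - p.1 - p.2].
Definition ser6 (p : G * G) : A := alpha p.2 (a (- p.1)) * b (- p.2).
End Series.

Definition l1prod (R : realType) (A : algType R[i]) (nrm : A -> R)
    (G : zmodType) (le : rel G) (alpha L : G -> A -> A) (a b : G -> A) (g : G) : A :=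
  if pselect (le 0 g) then
    fsum nrm (dom1 le g) (ser1 alpha a b)
    + fsum nrm (dom2 le g) (ser2 L a b)
    + fsum nrm (dom3 le g) (ser3 alpha a b)
  else
    fsum nrm (dom1 le g) (ser4 alpha a b)
    + fsum nrm (dom2 le g) (ser5 L a b)
    + fsum nrm (dom6 le g) (ser6 alpha a b).

Definition l1prod_series_converge (R : realType) (A : algType R[i]) (nrm : A -> R)
    (G : zmodType) (le : rel G) (alpha L : G -> A -> A) (a b : G -> A) : Prop :=
  forall g : G,
    (le 0 g ->
       [/\ summable nrm (dom1 le g) (ser1 alpha a b),
           summable nrm (dom2 le g) (ser2 L a b) &
           summable nrm (dom3 le g) (ser3 alpha a b)]) /\
    (~ le 0 g ->
       [/\ summable nrm (dom1 le g) (ser4 alpha a b),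
           summable nrm (dom2 le g) (ser5 L a b) &
           summable nrm (dom6 le g) (ser6 alpha a b)]).

(* Main.v *)
Require Import Defs.
From mathcomp Require Import all_boot all_order all_algebra.
From mathcomp Require Import complex.
From mathcomp Require Import all_classical all_reals esum.
Import Order.TTheory GRing.Theory Num.Theory.
Local Open Scope ring_scope.
From mathcomp Require Import lra ring.
Section Scalars.
Variable R : realType.
Lemma normc_real (r : R) : ComplexField.Normc.normc (r%:C)%C = `|r|.
Proof. by rewrite /= expr0n /= addr0 sqrtr_sqr. Qed.
Lemma normcN1 : ComplexField.Normc.normc (-1 : R[i]) = 1.
Proof. by rewrite /= oppr0 expr0n /= addr0 sqrrN expr1n sqrtr1. Qed.
Lemma normci : ComplexField.Normc.normc ('i%C : R[i]) = 1.
Proof. by rewrite /= expr0n /= add0r expr1n sqrtr1. Qed.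
Lemma conjR (r : R) : Num.conj ((r%:C)%C : R[i]) = (r%:C)%C.
Proof. apply/eqP; rewrite /= eq_complex /= oppr0 !eqxx. by []. Qed.
Lemma conji : Num.conj ('i%C : R[i]) = - 'i%C.
Proof. apply/eqP; rewrite /= eq_complex /= oppr0 !eqxx. by []. Qed.
Lemma ii : ('i%C * 'i%C : R[i]) = -1.
Proof. by rewrite -expr2 sqr_i. Qed.
End Scalars.
Section CStar.
Variables (R : realType) (A : algType R[i]) (nrm : A -> R) (star : A -> A).
Hypothesis HC : is_cstar nrm star.

Local Notation sc r a := ((r%:C)%C *: a).

Lemma nrm0 : nrm 0 = 0.
Proof. by rewrite -(scale0r (0 : A)) (cs_nrmZ HC) ComplexField.Normc.normc0 mul0r. Qed.

Lemma nrmN a : nrm (- a) = nrm a.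
Proof. by rewrite -scaleN1r (cs_nrmZ HC) normcN1 mul1r. Qed.

Lemma nrm_ge0 a : 0 <= nrm a.
Proof.
have := cs_nrmD HC a (- a); rewrite subrr nrm0 nrmN => h.
by rewrite -(@pmulr_rge0 _ 2%:R) // mulr2n mulrDl !mul1r.
Qed.

Lemma nrmB a b : nrm (a - b) = nrm (b - a).
Proof. by rewrite -nrmN opprB. Qed.

Lemma nrm_sc r a : nrm (sc r a) = `|r| * nrm a.
Proof. by rewrite (cs_nrmZ HC) normc_real. Qed.

Lemma nrm_eq0 a : nrm a = 0 -> a = 0.
Proof. by move=> h; apply: (cs_nrm_eq0 HC h). Qed.

Lemma nrm_small a : (forall e, 0 < e -> nrm a < e) -> a = 0.
Proof.
move=> h; apply: nrm_eq0; apply/eqP; rewrite eq_le nrm_ge0 andbT.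
rewrite leNgt; apply/negP => /h; by rewrite ltxx.
Qed.

Lemma nrm_sum (I : Type) (s : seq I) (P : pred I) (f : I -> A) :
  nrm (\sum_(i <- s | P i) f i) <= \sum_(i <- s | P i) nrm (f i).
Proof.
elim: s => [|x s IH]; first by rewrite !big_nil nrm0.
rewrite !big_cons; case: (P x) => //.
by apply: le_trans (cs_nrmD HC _ _) _; rewrite lerD2l.
Qed.

Lemma nrmM a b : nrm (a * b) <= nrm a * nrm b.
Proof. exact (cs_nrmM HC a b). Qed.

Lemma nrmD a b : nrm (a + b) <= nrm a + nrm b.
Proof. exact (cs_nrmD HC a b). Qed.

Lemma nrm_tri a b c : nrm (a - c) <= nrm (a - b) + nrm (b - c).
Proof. by apply: le_trans (nrmD _ _); rewrite addrA subrK. Qed.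

Lemma star0 : star 0 = 0.
Proof.
by apply: (addrI (star 0)); rewrite addr0 -(cs_starD HC) addr0.
Qed.

Lemma starN a : star (- a) = - star a.
Proof.
apply/eqP; rewrite -addr_eq0 -(cs_starD HC) addrC subrr star0 //.
Qed.

Lemma starB a b : star (a - b) = star a - star b.
Proof. by rewrite (cs_starD HC) starN. Qed.

Lemma starK a : star (star a) = a.
Proof. exact (cs_starK HC a). Qed.

Lemma starM a b : star (a * b) = star b * star a.
Proof. exact (cs_starM HC a b). Qed.

Lemma starD a b : star (a + b) = star a + star b.
Proof. exact (cs_starD HC a b). Qed.

Lemma star1 : star 1 = 1.
Proof.
by have := starM (star 1) 1; rewrite !(mulr1, starK) => e; rewrite -e.
Qed.

Lemma star_sc r a : star (sc r a) = sc r (star a).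
Proof. by rewrite (cs_starZ HC) conjR. Qed.

Lemma starMn a n : star (a *+ n) = star a *+ n.
Proof. by elim: n => [|n IH]; rewrite ?mulr0n ?star0 // !mulrS starD IH. Qed.

Lemma cstar a : nrm (star a * a) = nrm a ^+ 2.
Proof. exact (cs_cstar_id HC a). Qed.

Lemma nrm_star_le a : nrm a <= nrm (star a).
Proof.
have [a0|a0] := eqVneq (nrm a) 0; first by rewrite a0 nrm_ge0.
have pa : 0 < nrm a by rewrite lt_def a0 nrm_ge0.
have := nrmM (star a) a; rewrite cstar expr2.
by rewrite ler_pM2r.
Qed.

Lemma nrm_star a : nrm (star a) = nrm a.
Proof.
apply/eqP; rewrite eq_le nrm_star_le andbT.
by rewrite -{2}(starK a) nrm_star_le.
Qed.

Lemma proj_nrm p : star p = p -> p * p = p -> nrm p <= 1.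
Proof.
move=> sp pp; have := cstar p; rewrite sp pp expr2 => /eqP.
have [->|p0] := eqVneq (nrm p) 0; first by rewrite ler01.
rewrite -{1}(mulr1 (nrm p)) => /eqP /(mulfI p0) <-; by [].
Qed.

Definition conv (u : nat -> A) (l : A) :=
  forall e, 0 < e -> exists N, forall n, (N <= n)%N -> nrm (u n - l) < e.

Lemma conv_unique {u l l'} : conv u l -> conv u l' -> l = l'.
Proof.
move=> h1 h2; apply/eqP; rewrite -subr_eq0; apply/eqP/nrm_small => e e0.
have e2 : 0 < e / 2 by rewrite divr_gt0.
have [N1 H1] := h1 _ e2; have [N2 H2] := h2 _ e2.
have := H1 (maxn N1 N2) (leq_maxl _ _); have := H2 (maxn N1 N2) (leq_maxr _ _).
set x := u _ => q2 q1.
apply: le_lt_trans (nrm_tri _ x _) _.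
by rewrite nrmB [e]splitr ltrD.
Qed.

Lemma complete u : (forall e, 0 < e -> exists N, forall m n, (N <= m)%N -> (N <= n)%N ->
           nrm (u m - u n) < e) -> exists l, conv u l.
Proof. exact (cs_complete HC (u:=u)). Qed.


Lemma zmod_id3 (V : zmodType) (o l t : V) : o - l - (l - (l *+ 2 - t)) = o - t.
Proof. by rewrite mulr2n !opprB addrA -addrA (addrAC (l + l)) addrK addrA subrK. Qed.

Lemma conv_lip {u l v m} K : conv u l -> 0 <= K ->
  (forall n, nrm (v n - m) <= K * nrm (u n - l)) -> conv v m.
Proof.
move=> hu K0 hv e e0.
have e1 : 0 < e / (K + 1) by rewrite divr_gt0 // ltr_wpDl.
have [N HN] := hu _ e1; exists N => n /HN h.
apply: le_lt_trans (hv n) _.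
have K1 : 0 < K + 1 by rewrite ltr_wpDl.
have le1 : K * nrm (u n - l) <= (K + 1) * nrm (u n - l).
  by rewrite ler_wpM2r ?nrm_ge0 // lerDl.
apply: le_lt_trans le1 _.
by rewrite mulrC -ltr_pdivlMr.
Qed.

Lemma conv_shift {u l} : conv u l -> conv (fun n => u n.+1) l.
Proof. by move=> h e /h [N HN]; exists N => n Nn; apply: HN; apply: leqW. Qed.

Lemma sqrt_ex t : star t = t -> nrm t <= 1 ->
  exists s, [/\ star s = s, s * s = 1 - t & forall x, x * t = t * x -> x * s = s * x].
Proof.
move=> st nt.
pose h := (2^-1 : R).
have h0 : 0 < h by rewrite /h invr_gt0 ltr0n.
have h2 : h * 2 = 1 by rewrite /h mulVf // pnatr_eq0.
pose y := fix y n := if n is n'.+1 then sc h (t + y n' * y n') else 0.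
pose r := fix r n := if n is n'.+1 then h * (1 + r n' * r n') else 0.
have r01 : forall n, 0 <= r n /\ r n <= 1.
  elim=> [|n [IH1 IH2]] /=; first by rewrite lexx ler01.
  have : r n * r n <= 1 by rewrite mulr_ile1.
  have : 0 <= r n * r n by rewrite mulr_ge0.
  rewrite /h; split; lra.
have rinc : forall n, r n <= r n.+1.
  move=> n /=; have [r0 r1] := r01 n.
  have : 0 <= (1 - r n) * (1 - r n) by rewrite mulr_ge0 // subr_ge0.
  by rewrite /h; nra.
have rtail : forall n, (1 - r n) * (n%:R + 2) <= 2.
  elim=> [|n IH] /=; first by rewrite subr0 mul1r add0r.
  have [r0 r1] := r01 n.
  set e := 1 - r n.
  have e0 : 0 <= e by rewrite subr_ge0.
  have e1 : e <= 1 by rewrite /e; lra.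
  have hh : 0 <= (2 - e * (n%:R + 2)) * (1 - e / 2).
    by apply: mulr_ge0; rewrite subr_ge0 // ler_pdivrMr //; lra.
  have -> : 1 - h * (1 + r n * r n) = e - e * e / 2.
    by rewrite /e /h; field.
  have -> : (n.+1%:R : R) = n%:R + 1 by rewrite natr1.
  have n0 : 0 <= (n%:R : R) by rewrite ler0n.
  have -> : (e - e * e / 2) * (n%:R + 1 + 2) =
    2 - ((2 - e * (n%:R + 2)) * (1 - e / 2) + e * e / 2) by field.
  rewrite lerBlDr lerDl; apply: addr_ge0 => //.
  by rewrite divr_ge0 ?mulr_ge0 ?ler0n.
have ny : forall n, nrm (y n) <= r n.
  elim=> [|n IH] /=; first by rewrite nrm0.
  rewrite nrm_sc (ger0_norm (ltW h0)).
  rewrite ler_pM2l //.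
  apply: le_trans (nrmD _ _) _; apply: lerD => //.
  apply: le_trans (nrmM _ _) _; apply: ler_pM => //; exact: nrm_ge0.
have nd : forall n, nrm (y n.+1 - y n) <= r n.+1 - r n.
  elim=> [|n IH].
    rewrite /= !subr0 !mulr0 !addr0 mulr1 nrm_sc (ger0_norm (ltW h0)).
    by rewrite -[X in _ <= X]mulr1 ler_pM2l.
  have -> : y n.+2 - y n.+1 = sc h (y n.+1 * y n.+1 - y n * y n).
    by rewrite /= -scalerBr opprD addrACA subrr add0r.
  have -> : y n.+1 * y n.+1 - y n * y n =
            (y n.+1 - y n) * y n.+1 + y n * (y n.+1 - y n).
    by rewrite mulrBl mulrBr addrA subrK.
  rewrite nrm_sc (ger0_norm (ltW h0)).
  have -> : r n.+2 - r n.+1 = h * ((r n.+1 - r n) * r n.+1 + r n * (r n.+1 - r n)).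
    by rewrite /=; ring.
  rewrite ler_pM2l //; apply: le_trans (nrmD _ _) _.
  have [a0 _] := r01 n; have [a1 _] := r01 n.+1.
  apply: lerD; (apply: le_trans (nrmM _ _) _; apply: ler_pM => //; exact: nrm_ge0).
have nmn : forall n k, nrm (y (k + n)%N - y n) <= r (k + n)%N - r n.
  move=> n; elim=> [|k IH]; first by rewrite add0n !subrr nrm0.
  apply: le_trans (nrm_tri _ (y (k + n)%N) _) _.
  have -> : r (k.+1 + n)%N - r n = (r (k + n).+1 - r (k + n)%N) + (r (k + n)%N - r n).
    by rewrite addSn addrA subrK.
  by rewrite addSn; apply: lerD.
have cauchy : forall N m, (N <= m)%N -> nrm (y m - y N) <= 2 / (N%:R + 2).
  move=> N m Nm; rewrite -(subnK Nm).
  apply: le_trans (nmn _ _) _.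
  have [_ c1] := r01 (m - N + N)%N.
  rewrite ler_pdivlMr ?ltr_wpDl ?ler0n //.
  apply: le_trans (rtail N); rewrite ler_wpM2r ?addr_ge0 ?ler0n //.
  by rewrite lerD2r.
have [l hl] : exists l, conv y l.
  apply: complete => e e0.
  have e2 : 0 <= 2 / e by rewrite divr_ge0 // ltW.
  exists (Num.bound (2 / e)) => m n Hm Hn.
  have key : forall N, (Num.bound (2 / e) <= N)%N -> 2 / (N%:R + 2) < e.
    move=> N HN; rewrite ltr_pdivrMr ?ltr_wpDl ?ler0n //.
    have := archi_boundP e2; rewrite ltr_pdivrMr // => hb.
    apply: lt_le_trans hb _; rewrite [e * _]mulrC ler_pM2r //.
    have le1 : (Num.bound (2 / e))%:R <= (N%:R : R) by rewrite ler_nat.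
    by apply: le_trans le1 _; rewrite lerDl.
  case: (leqP n m) => nm.
    by apply: le_lt_trans (cauchy _ _ nm) (key _ Hn).
  by rewrite nrmB; apply: le_lt_trans (cauchy _ _ (ltnW nm)) (key _ Hm).
have yle1 : forall n, nrm (y n) <= 1 by move=> n; apply: le_trans (ny n) (r01 n).2.
have lfix : l = sc h (t + l * l).
  apply: (conv_unique (conv_shift hl)).
  apply: (conv_lip (h * (1 + nrm l)) hl).
    by apply: mulr_ge0; [exact: ltW | apply: addr_ge0; [exact: ler01 | exact: nrm_ge0]].
  move=> n /=; rewrite -scalerBr nrm_sc (ger0_norm (ltW h0)) -mulrA ler_pM2l //.
  rewrite opprD addrACA subrr add0r.
  have -> : y n * y n - l * l = (y n - l) * y n + l * (y n - l).
    by rewrite mulrBl mulrBr addrA subrK.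
  apply: le_trans (nrmD _ _) _; rewrite [X in _ <= X]mulrDl mul1r.
  apply: lerD.
    apply: le_trans (nrmM _ _) _; rewrite -[X in _ <= X]mulr1.
    by rewrite ler_wpM2l ?nrm_ge0.
  by apply: le_trans (nrmM _ _) _; rewrite mulrC.
have ysa : forall n, star (y n) = y n.
  elim=> [|n IH] /=; first exact: star0.
  by rewrite star_sc starD starM IH st.
have lsa : star l = l.
  apply: (conv_unique (u := y)) => //.
  apply: (conv_lip 1 hl); first exact: ler01.
  by move=> n; rewrite mul1r -{1}ysa -starB nrm_star.
have l2 : l * l = l *+ 2 - t.
  have : sc 2 l = t + l * l by rewrite {1}lfix scalerA -rmorphM mulrC h2 scale1r.
  have -> : sc 2 l = l *+ 2 by rewrite -scaler_nat rmorph_nat.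
  by move=> ->; rewrite addrAC subrr add0r.
exists (1 - l); split.
- by rewrite starB star1 lsa.
- by rewrite mulrBl mul1r mulrBr mulr1 l2 zmod_id3.
- move=> x xt.
  have yc : forall n, x * y n = y n * x.
    elim=> [|n IH] /=; first by rewrite mulr0 mul0r.
    by rewrite -scalerAr -scalerAl mulrDr mulrDl xt mulrA IH -mulrA IH mulrA.
  have : x * l = l * x.
    apply: (conv_unique (u := fun n => x * y n)).
      apply: (conv_lip (nrm x) hl); first exact: nrm_ge0.
      by move=> n; rewrite -mulrBr nrmM.
    apply: (conv_lip (nrm x) hl); first exact: nrm_ge0.
    by move=> n; rewrite yc -mulrBl mulrC nrmM.
  by move=> xl; rewrite mulrBr mulrBl mulr1 mul1r xl.
Qed.
Lemma sq_le (x y : R) : 0 <= x -> 0 <= y -> x ^+ 2 <= y ^+ 2 -> x <= y.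
Proof. by move=> x0 y0; rewrite ler_sqr ?nnegrE. Qed.

Lemma cpos_sa a : cpos star a -> star a = a.
Proof. by case=> b ->; rewrite starM starK. Qed.

Lemma i_neq0 : ('i%C : R[i]) != 0.
Proof. by apply/eqP => /(congr1 (fun z : R[i] => let: Complex _ b := z in b)) /= /eqP; rewrite oner_eq0. Qed.
Lemma two_neq0 : (2%:R : R[i]) != 0.
Proof. by rewrite pnatr_eq0. Qed.
Lemma mulrn2I (x y : A) : x *+ 2 = y *+ 2 -> x = y.
Proof. move=> e; apply: (scalerI (V := A) two_neq0); by rewrite !scaler_nat. Qed.

Lemma zmod_solve (x y sx sy : A) : sx + sy = x + y -> sy - sx = x - y -> sx = y.
Proof.
move=> e1 e2; apply: mulrn2I.
have : (sx + sy) - (sy - sx) = (x + y) - (x - y) by rewrite e1 e2.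
rewrite !opprB addrACA subrr addr0 [y - x]addrC addrACA subrr add0r.
by rewrite -!mulr2n.
Qed.

Lemma sc2 (x : A) : x *+ 2 = sc 2%:R x.
Proof. by rewrite rmorph_nat scaler_nat. Qed.

Section Endo.
Variable f : A -> A.
Hypothesis Hf : is_star_endo star f.

Lemma f_add a b : f (a + b) = f a + f b. Proof. exact (se_add Hf a b). Qed.
Lemma f_mul a b : f (a * b) = f a * f b. Proof. exact (se_mul Hf a b). Qed.
Lemma f_star a : f (star a) = star (f a). Proof. exact (se_star Hf a). Qed.
Lemma f_scale c a : f (c *: a) = c *: f a. Proof. exact (se_scale Hf c a). Qed.
Lemma f0 : f 0 = 0.
Proof. by apply: (addrI (f 0)); rewrite -f_add !addr0. Qed.
Lemma fN a : f (- a) = - f a.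
Proof. by apply: (addrI (f a)); rewrite -f_add !subrr f0. Qed.

Lemma f1_sa : star (f 1) = f 1. Proof. by rewrite -f_star star1. Qed.
Lemma f1_idem : f 1 * f 1 = f 1. Proof. by rewrite -f_mul mulr1. Qed.
Lemma f1_nrm : nrm (f 1) <= 1. Proof. exact: proj_nrm f1_sa f1_idem. Qed.

Lemma endo_contr_sa h : star h = h -> nrm h <= 1 -> nrm (f h) <= 1.
Proof.
move=> sh nh.
have st : star (h * h) = h * h by rewrite starM sh.
have nt : nrm (h * h) <= 1.
  by apply: le_trans (nrmM _ _) _; rewrite mulr_ile1 ?nrm_ge0.
have [s [ss s2 scm]] := sqrt_ex _ st nt.
have hs : h * s = s * h by apply: scm; rewrite mulrA.
pose u := h + 'i%C *: s.
have su : star u = h - 'i%C *: s by rewrite /u starD (cs_starZ HC) conji ss scaleNr sh.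
have uu : star u * u = 1.
  rewrite su /u mulrDr !mulrBl -!scalerAl -!scalerAr scalerA ii scaleN1r s2 hs.
  by rewrite opprK addrA subrK addrC subrK.
have pu : nrm (f u) <= 1.
  have e : nrm (star (f u) * f u) = nrm (f 1) by rewrite -f_star -f_mul uu.
  have := f1_nrm; rewrite -e cstar expr_le1 //; exact: nrm_ge0.
have e2 : f u + star (f u) = f h *+ 2.
  by rewrite -f_star -f_add su /u addrACA subrr addr0 mulr2n f_add.
have : nrm (f h *+ 2) <= 2%:R.
  rewrite -e2; apply: le_trans (nrmD _ _) _; rewrite nrm_star.
  by rewrite mulr2n lerD.
rewrite sc2 nrm_sc ger0_norm ?ler0n // => h2.
by rewrite -(@ler_pM2l _ 2%:R) ?ltr0n // mulr1.
Qed.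

Lemma endo_contr a : nrm (f a) <= nrm a.
Proof.
have [a0|a0] := eqVneq (nrm a) 0.
  by rewrite (nrm_eq0 _ a0) f0 nrm0.
have k0 : 0 < nrm a by rewrite lt_def a0 nrm_ge0.
pose h := sc ((nrm a ^+ 2)^-1) (star a * a).
have sh : star h = h by rewrite /h star_sc starM starK.
have k2 : nrm a ^+ 2 != 0 by rewrite expf_neq0.
have nh : nrm h <= 1.
  rewrite /h nrm_sc cstar ger0_norm ?invr_ge0 ?exprn_ge0 ?nrm_ge0 //.
  by rewrite mulVf.
have := endo_contr_sa _ sh nh.
rewrite /h f_scale f_mul f_star nrm_sc cstar ger0_norm ?invr_ge0 ?exprn_ge0 ?nrm_ge0 //.
rewrite mulrC ler_pdivrMr ?exprn_gt0 // mul1r => hle.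
by apply: sq_le => //; exact: nrm_ge0.
Qed.
End Endo.
Arguments f_add {f} Hf a b.
Arguments f_mul {f} Hf a b.
Arguments f_star {f} Hf a.
Arguments f_scale {f} Hf c a.
Arguments f0 {f} Hf.
Arguments fN {f} Hf a.
Arguments f1_sa {f} Hf.
Arguments f1_idem {f} Hf.
Arguments f1_nrm {f} Hf.
Arguments endo_contr {f} Hf a.

Section Transfer.
Variables (f l : A -> A).
Hypothesis Hf : is_star_endo star f.
Hypothesis l_add : forall a b, l (a + b) = l a + l b.
Hypothesis l_scale : forall (c : R[i]) a, l (c *: a) = c *: l a.
Hypothesis l_cont : exists K : R, forall a, nrm (l a) <= K * nrm a.
Hypothesis l_pos : forall a, cpos star a -> cpos star (l a).
Hypothesis l_mod : forall a b, l (f a * b) = a * l b.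
Hypothesis l_cond : forall a, f (l a) = f 1 * a * f 1.

Lemma l0 : l 0 = 0.
Proof. by apply: (addrI (l 0)); rewrite -l_add !addr0. Qed.
Lemma lN a : l (- a) = - l a.
Proof. by apply: (addrI (l a)); rewrite -l_add !subrr l0. Qed.
Lemma lB a b : l (a - b) = l a - l b.
Proof. by rewrite l_add lN. Qed.

Lemma l_sa h : star h = h -> star (l h) = l h.
Proof.
move=> sh.
have [h0|h0] := eqVneq (nrm h) 0.
  by rewrite (nrm_eq0 _ h0) l0 star0.
have k0 : 0 < nrm h by rewrite lt_def h0 nrm_ge0.
pose h' := sc ((nrm h)^-1) h.
have sh' : star h' = h' by rewrite /h' star_sc sh.
have nh' : nrm h' <= 1.
  by rewrite /h' nrm_sc ger0_norm ?invr_ge0 ?nrm_ge0 // mulVf.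
have sN : star (- h') = - h' by rewrite starN sh'.
have nN : nrm (- h') <= 1 by rewrite nrmN.
have [s1 [s1s s1q _]] := sqrt_ex _ sN nN.
have [s2 [s2s s2q _]] := sqrt_ex _ sh' nh'.
have p1 : star (l (1 + h')) = l (1 + h').
  apply: cpos_sa; apply: l_pos; exists s1.
  by rewrite s1s s1q opprK.
have p2 : star (l (1 - h')) = l (1 - h').
  apply: cpos_sa; apply: l_pos; exists s2.
  by rewrite s2s s2q.
have e : l (1 + h') - l (1 - h') = l h' *+ 2.
  by rewrite l_add lB opprB [l h' - _]addrC addrACA subrr add0r mulr2n.
have e' : star (l h') = l h'.
  apply: mulrn2I; rewrite -starMn -e starB p1 p2 //.
have -> : h = sc (nrm h) h'.
  by rewrite /h' scalerA -rmorphM mulfV // scale1r.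
by rewrite l_scale star_sc e'.
Qed.

Lemma l_star a : star (l a) = l (star a).
Proof.
apply: (zmod_solve (l a) (l (star a)) (star (l a)) (star (l (star a)))).
  have := l_sa (a + star a).
  rewrite starD starK addrC => /(_ erefl).
  by rewrite l_add starD => ->.
have := l_sa ('i%C *: (a - star a)).
have -> : star ('i%C *: (a - star a)) = 'i%C *: (a - star a).
  by rewrite (cs_starZ HC) conji starB starK scaleNr -scalerN opprB.
move=> /(_ erefl).
rewrite l_scale lB (cs_starZ HC) conji starB scaleNr -scalerN.
move/(scalerI (V := A) i_neq0) => <-.
by rewrite opprB.
Qed.

Lemma l_rmod b e : l (b * f e) = l b * e.
Proof.
by rewrite -[l (b * f e)]starK l_star starM -(f_star Hf) l_mod starM -l_star !starK.
Qed.

Lemma l_unit w : l (f 1 * w) = l w.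
Proof. by rewrite l_mod mul1r. Qed.

Lemma l_contr w : nrm (l w) <= nrm w.
Proof.
have [K HK] := l_cont.
pose K' := `|K|.
have HK' : forall a, nrm (l a) <= K' * nrm a.
  move=> a; apply: le_trans (HK a) _; rewrite ler_wpM2r ?nrm_ge0 //.
  exact: ler_norm.
have step : forall w, nrm (l w) ^+ 2 <= nrm (l (star (f 1 * w * f 1) * (f 1 * w * f 1))).
  move=> v; set c := l v.
  have cq : c * l 1 = c.
    rewrite -[c * _]l_mod /c l_cond mulr1 -mulrA l_unit l_rmod mulr1 //.
  have cc : star c * c = l (f (star c * c)).
    by rewrite -[f _]mulr1 l_mod -mulrA cq.
  by rewrite -cstar cc (f_mul Hf) (f_star Hf) /c l_cond.
have bnd : forall v, nrm (star (f 1 * v * f 1) * (f 1 * v * f 1)) <= nrm v ^+ 2.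
  move=> v; rewrite cstar; apply: lerXn2r; rewrite ?nnegrE ?nrm_ge0 //.
  apply: le_trans (nrmM _ _) _.
  have := f1_nrm Hf => q.
  rewrite -[X in _ <= X]mulr1; apply: ler_pM; rewrite ?nrm_ge0 //.
  by apply: le_trans (nrmM _ _) _; apply: ler_piMl; rewrite ?nrm_ge0.
have P : forall n v, nrm (l v) ^+ (2 ^ n) <= K' * nrm v ^+ (2 ^ n).
  elim=> [|n IH] v; first by rewrite !expr1.
  rewrite expnS !exprM.
  have stp : (nrm (l v) ^+ 2) ^+ (2 ^ n) <=
      nrm (l (star (f 1 * v * f 1) * (f 1 * v * f 1))) ^+ (2 ^ n).
    by apply: lerXn2r; rewrite ?nnegrE ?exprn_ge0 ?nrm_ge0 // step.
  apply: le_trans stp _; apply: le_trans (IH _) _.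
  apply: ler_wpM2l; first exact: normr_ge0.
  by apply: lerXn2r; rewrite ?nnegrE ?exprn_ge0 ?nrm_ge0.
have [//|lt] := leP (nrm (l w)) (nrm w).
have w0 : 0 < nrm w.
  rewrite lt_def nrm_ge0 andbT; apply/eqP => w0.
  by move: lt; rewrite (nrm_eq0 _ w0) l0 nrm0 ltxx.
pose r := nrm (l w) / nrm w.
have r1 : 1 < r by rewrite /r ltr_pdivlMr // mul1r.
have Pr : forall n, r ^+ (2 ^ n) <= K'.
  move=> n; rewrite /r expr_div_n ler_pdivrMr ?exprn_gt0 //; exact: P.
have bern : forall m, 1 + m%:R * (r - 1) <= r ^+ m.
  elim=> [|m IH]; first by rewrite mul0r addr0 expr0.
  rewrite exprS -natr1.
  have d0 : 0 <= r - 1 by rewrite subr_ge0 ltW.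
  have : 0 <= m%:R * (r - 1) * (r - 1).
    by apply: mulr_ge0 => //; apply: mulr_ge0 => //; exact: ler0n.
  have : (1 + m%:R * (r - 1)) * r <= r ^+ m * r.
    by apply: ler_wpM2r => //; apply: ltW; apply: lt_trans r1.
  move: IH; nra.
have d0 : 0 < r - 1 by rewrite subr_gt0.
have K0 : 0 <= K' / (r - 1) by rewrite divr_ge0 ?normr_ge0 ?ltW.
have := archi_boundP K0; set n := Num.bound _ => hn.
have := Pr n; have := bern (2 ^ n)%N.
have : (n%:R : R) <= (2 ^ n)%N%:R by rewrite ler_nat ltnW // ltn_expl.
move: hn; rewrite ltr_pdivrMr // => hn.
have : 0 <= (n%:R : R) by rewrite ler0n.
nra.
Qed.
End Transfer.
Section Summation.
Variables (I : eqType) (P : I -> Prop).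

Lemma sum_split (V : zmodType) (F H : seq I) (f : I -> V) :
  uniq F -> uniq H -> {subset H <= F} ->
  \sum_(i <- F) f i = \sum_(i <- H) f i + \sum_(i <- F | i \notin H) f i.
Proof.
move=> uF uH sHF; rewrite (bigID (mem H)) /=; congr (_ + _).
rewrite -big_filter; apply: perm_big; apply: uniq_perm.
- exact: filter_uniq.
- exact: uH.
by move=> i; rewrite mem_filter; apply/andP/idP => [[]//|iH]; split => //; apply: sHF.
Qed.

Lemma sum_le_seq (F : seq I) (a b : I -> R) :
  (forall i, i \in F -> a i <= b i) -> \sum_(i <- F) a i <= \sum_(i <- F) b i.
Proof. by move=> h; rewrite big_seq [X in _ <= X]big_seq; apply: ler_sum. Qed.

Lemma sum_ge0_seq (F : seq I) (a : I -> R) :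
  (forall i, i \in F -> 0 <= a i) -> 0 <= \sum_(i <- F) a i.
Proof. by move=> h; rewrite big_seq; apply: sumr_ge0. Qed.

Lemma fsum_has (f : I -> A) : Defs.summable nrm P f -> has_sum nrm P f (fsum nrm P f).
Proof. by rewrite /fsum; case: pselect => // h _; exact: (projT2 (cid h)). Qed.

Lemma has_sum_nrm (f : I -> A) s : has_sum nrm P f s -> forall e, 0 < e ->
  exists F, [/\ uniq F, (forall i, i \in F -> P i) & nrm s <= \sum_(i <- F) nrm (f i) + e].
Proof.
move=> hs e e0; have [F0 [F0P HF0]] := hs e e0.
exists (undup F0); split; first exact: undup_uniq.
  by move=> i; rewrite mem_undup; apply: F0P.
have hU : forall i, i \in undup F0 -> P i by move=> i; rewrite mem_undup => /F0P.
have sU : {subset F0 <= undup F0} by move=> i; rewrite mem_undup.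
have := HF0 (undup F0) (undup_uniq _) hU sU.
set u := \sum_(i <- _) f i => hu.
have : nrm s <= nrm u + nrm (u - s).
  have e1 : u + (s - u) = s by rewrite addrC subrK.
  by have := nrmD u (s - u); rewrite e1 nrmB.
move=> h1; apply: le_trans h1 _; apply: lerD; first exact: nrm_sum.
exact: ltW.
Qed.

Lemma has_sum_rproj (f : I -> A) s p : nrm p <= 1 -> (forall i, P i -> f i * p = f i) ->
  has_sum nrm P f s -> s * p = s.
Proof.
move=> np hp hs; apply/eqP; rewrite -subr_eq0; apply/eqP; apply: nrm_small => e e0.
have e2 : 0 < e / 2 by rewrite divr_gt0.
have [F0 [F0P HF0]] := hs _ e2.
have hU : forall i, i \in undup F0 -> P i by move=> i; rewrite mem_undup => /F0P.
have sU : {subset F0 <= undup F0} by move=> i; rewrite mem_undup.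
have := HF0 (undup F0) (undup_uniq _) hU sU.
set u := \sum_(i <- _) f i => hu.
have up : u * p = u.
  rewrite /u big_distrl /= big_seq [X in _ = X]big_seq; apply: eq_bigr => i.
  by move/hU/hp.
have -> : s * p - s = (s - u) * p + (u - s) by rewrite mulrBl up addrA subrK.
apply: le_lt_trans (nrmD _ _) _; rewrite [e]splitr; apply: ler_ltD => //.
apply: le_trans (nrmM _ _) _; rewrite nrmB.
have h1 : nrm (u - s) * nrm p <= nrm (u - s).
  by apply: ler_piMr => //; exact: nrm_ge0.
by apply: le_trans h1 _; exact: ltW.
Qed.

Lemma has_sum_lproj (f : I -> A) s p : nrm p <= 1 -> (forall i, P i -> p * f i = f i) ->
  has_sum nrm P f s -> p * s = s.
Proof.
move=> np hp hs; apply/eqP; rewrite -subr_eq0; apply/eqP; apply: nrm_small => e e0.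
have e2 : 0 < e / 2 by rewrite divr_gt0.
have [F0 [F0P HF0]] := hs _ e2.
have hU : forall i, i \in undup F0 -> P i by move=> i; rewrite mem_undup => /F0P.
have sU : {subset F0 <= undup F0} by move=> i; rewrite mem_undup.
have := HF0 (undup F0) (undup_uniq _) hU sU.
set u := \sum_(i <- _) f i => hu.
have up : p * u = u.
  rewrite /u big_distrr /= big_seq [X in _ = X]big_seq; apply: eq_bigr => i.
  by move/hU/hp.
have -> : p * s - s = p * (s - u) + (u - s) by rewrite mulrBr up addrA subrK.
apply: le_lt_trans (nrmD _ _) _; rewrite [e]splitr; apply: ler_ltD => //.
apply: le_trans (nrmM _ _) _; rewrite nrmB.
have h1 : nrm p * nrm (u - s) <= nrm (u - s).
  by apply: ler_piMl => //; exact: nrm_ge0.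
by apply: le_trans h1 _; exact: ltW.
Qed.

Lemma inv_small (e : R) : 0 < e -> exists N, forall n, (N <= n)%N -> (n.+1%:R)^-1 < e.
Proof.
move=> e0; have ei : 0 <= e^-1 by rewrite invr_ge0 ltW.
exists (Num.bound e^-1) => n hn.
rewrite invf_plt ?posrE ?ltr0n //.
apply: lt_le_trans (archi_boundP ei) _.
by rewrite ler_nat; apply: leqW.
Qed.

Lemma summable_abs (f : I -> A) (w : I -> R) (B : R) :
  (forall i, P i -> nrm (f i) <= w i) ->
  (forall F, uniq F -> (forall i, i \in F -> P i) -> \sum_(i <- F) w i <= B) ->
  Defs.summable nrm P f.
Proof.
move=> fw wB.
pose S : set R := fun x => exists F, [/\ uniq F, (forall i, i \in F -> P i) & x = \sum_(i <- F) w i].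
have hS : has_sup S.
  split; first by exists 0; exists [::]; split => //; rewrite big_nil.
  by exists B => x [F [uF PF ->]]; apply: wB.
pose sg := sup S.
have Fch : forall n : nat, exists F, [/\ uniq F, (forall i, i \in F -> P i) &
    sg - (n.+1%:R)^-1 < \sum_(i <- F) w i].
  move=> n; have ne : 0 < (n.+1%:R : R)^-1 by rewrite invr_gt0 ltr0n.
  have [x [F [uF PF ->]] hx] := sup_adherent ne hS.
  by exists F.
have [Fs HFs] := choice Fch.
pose H n := undup (flatten [seq Fs k | k <- iota 0 n.+1]).
have Hu : forall n, uniq (H n) by move=> n; exact: undup_uniq.
have memH : forall n i, (i \in H n) -> exists2 k, (k <= n)%N & i \in Fs k.
  move=> n i; rewrite mem_undup => /flatten_mapP [k]; rewrite mem_iota add0n ltnS => kn ik.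
  by exists k.
have HP : forall n i, i \in H n -> P i.
  by move=> n i /memH [k _ ik]; have [_ PF _] := HFs k; apply: PF.
have HFn : forall n, {subset Fs n <= H n}.
  move=> n i iF; rewrite mem_undup; apply/flatten_mapP; exists n => //.
  by rewrite mem_iota add0n ltnS leqnn.
have Hmono : forall n m, (n <= m)%N -> {subset H n <= H m}.
  move=> n m nm i /memH [k kn ik]; rewrite mem_undup; apply/flatten_mapP; exists k => //.
  by rewrite mem_iota add0n ltnS (leq_trans kn nm).
have tail : forall n F, uniq F -> (forall i, i \in F -> P i) ->
    (forall i, i \in F -> i \notin H n) -> \sum_(i <- F) w i < (n.+1%:R)^-1.
  move=> n F uF PF dF; have [uFn PFn hFn] := HFs n.
  have u2 : uniq (Fs n ++ F).
    rewrite cat_uniq uFn uF andbT; apply/hasPn => i /dF; apply: contra; exact: HFn.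
  have : \sum_(i <- Fs n ++ F) w i <= sg.
    apply: sup_upper_bound => //; exists (Fs n ++ F); split => //.
    by move=> i; rewrite mem_cat => /orP [/PFn|/PF].
  rewrite big_cat /= => hs.
  have h3 : \sum_(i <- F) w i <= sg - \sum_(i <- Fs n) w i by rewrite lerBrDl.
  by apply: le_lt_trans h3 _; rewrite ltrBlDr addrC -ltrBlDr.
pose u n := \sum_(i <- H n) f i.
have tailf : forall n F, uniq F -> (forall i, i \in F -> P i) -> {subset H n <= F} ->
    nrm (\sum_(i <- F) f i - u n) < (n.+1%:R)^-1.
  move=> n F uF PF sF; rewrite /u (@sum_split _ F (H n) f uF (Hu n) sF) addrAC subrr add0r.
  apply: le_lt_trans (nrm_sum _ _ _ _) _; rewrite -big_filter.
  apply: le_lt_trans (tail n _ _ _ _).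
  - apply: sum_le_seq => i; rewrite mem_filter => /andP [_ iF].
    exact: fw (PF _ iF).
  - exact: filter_uniq.
  - by move=> i; rewrite mem_filter => /andP [_ iF]; apply: PF.
  - by move=> i; rewrite mem_filter => /andP [].
have udiff : forall n m, (n <= m)%N -> nrm (u m - u n) < (n.+1%:R)^-1.
  move=> n m nm; apply: tailf => //; [exact: HP | exact: Hmono].
have [l hl] : exists l, conv u l.
  apply: complete => e e0; have [N HN] := inv_small _ e0.
  exists N => m n Nm Nn; case: (leqP n m) => nm.
    by apply: lt_trans (udiff _ _ nm) (HN _ Nn).
  by rewrite nrmB; apply: lt_trans (udiff _ _ (ltnW nm)) (HN _ Nm).
exists l => e e0.
have e2 : 0 < e / 2 by rewrite divr_gt0.
have [N1 HN1] := inv_small _ e2; have [N2 HN2] := hl _ e2.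
pose n := maxn N1 N2.
exists (H n); split; first exact: HP.
move=> F uF PF sF.
have -> : \sum_(i <- F) f i - l = (\sum_(i <- F) f i - u n) + (u n - l) by rewrite addrA subrK.
apply: le_lt_trans (nrmD _ _) _; rewrite [e]splitr; apply: ltrD.
  by apply: lt_trans (tailf _ _ uF PF sF) (HN1 _ (leq_maxl _ _)).
exact: HN2 (leq_maxr _ _).
Qed.
End Summation.
Arguments summable_abs {I P f} w B.
Arguments has_sum_nrm {I P f s}.
Arguments fsum_has {I P f}.
Arguments has_sum_rproj {I P f s p}.
Arguments has_sum_lproj {I P f s p}.

Local Open Scope classical_set_scope.
Lemma l1_fin (G : zmodType) (c : G -> A) : (l1norm nrm c < +oo)%E ->
  exists n : R, [/\ 0 <= n, l1norm nrm c = n%:E &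
    forall F, uniq F -> \sum_(i <- F) nrm (c i) <= n].
Proof.
move=> hc.
have h0 : (0 <= l1norm nrm c)%E by apply: esum_ge0 => x _; rewrite lee_fin nrm_ge0.
have hf : l1norm nrm c \is a fin_num by rewrite ge0_fin_numE.
exists (fine (l1norm nrm c)); split.
- by rewrite -lee_fin fineK.
- by rewrite fineK.
move=> F uF; rewrite -lee_fin fineK // -sumEFin fsbig_seq //.
apply: esum_ge; exists [set` F] => //; split => //; exact: finite_seq.
Qed.
Local Close Scope classical_set_scope.

Lemma small_le (x y c : R) : 0 <= c -> (forall e, 0 < e -> x <= y + c * e) -> x <= y.
Proof.
move=> c0 h; rewrite leNgt; apply/negP => xy.
have d0 : 0 < (x - y) / (c + 1) by rewrite divr_gt0 // ?subr_gt0 // ltr_wpDl.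
have := h _ d0.
have c1 : 0 < c + 1 by rewrite ltr_wpDl.
have : c * ((x - y) / (c + 1)) < x - y.
  rewrite mulrA ltr_pdivrMr // mulrC ltr_pM2l ?subr_gt0 //.
  by rewrite ltrDl.
lra.
Qed.

Section Main.
Variables (G : zmodType) (le : rel G) (alpha L : G -> A -> A).
Hypothesis HT : is_toag le.
Hypothesis HE : is_endo_action star le alpha.
Hypothesis HL : is_transfer_action nrm star le alpha L.

Lemma le_neg x : le 0 x -> le 0 (- x) -> x = 0.
Proof.
move=> h1 h2; have := tg_transl HT x h2; rewrite add0r addNr => h3.
exact (tg_anti HT h3 h1).
Qed.

Lemma not_le0 x : ~ le 0 x -> le 0 (- x) /\ - x <> 0.
Proof.
move=> h; have := tg_total HT 0 x; rewrite (introF idP h) /= => h1.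
split; first by have := tg_transl HT (- x) h1; rewrite subrr add0r.
by move/eqP; rewrite oppr_eq0 => /eqP x0; apply: h; rewrite x0 (tg_refl HT).
Qed.

Lemma le_addp x y : le 0 x -> le 0 y -> le 0 (x + y).
Proof.
move=> h1 h2; have := tg_transl HT x h2; rewrite add0r => h3.
by rewrite addrC; exact (tg_trans HT h1 h3).
Qed.

Lemma gt_notneg x : glt le 0 x -> ~ le 0 (- x).
Proof. by case=> h1 h2 h3; apply: h2; rewrite (le_neg _ h1 h3). Qed.

Lemma a_contr x c : le 0 x -> nrm (alpha x c) <= nrm c.
Proof. by move=> hx; exact (endo_contr (ea_endo HE hx) c). Qed.

Lemma L_contr x w : le 0 x -> nrm (L x w) <= nrm w.
Proof.
move=> hx; exact (l_contr _ _ (ea_endo HE hx) (ta_add HL hx) (ta_scale HL hx)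
  (ta_cont HL hx) (ta_pos HL hx) (ta_module HL hx) (ta_cond HL hx) w).
Qed.

Lemma L_rmod x w e : le 0 x -> L x (w * alpha x e) = L x w * e.
Proof.
move=> hx; exact (l_rmod _ _ (ea_endo HE hx) (ta_add HL hx) (ta_scale HL hx)
  (ta_pos HL hx) (ta_module HL hx) w e).
Qed.


Variables (a b : G -> A) (na nb : R).
Hypothesis Ha1 : forall x, le 0 x ->
  (exists c, a x = c * alpha x 1) /\ (exists c, a (- x) = alpha x 1 * c).
Hypothesis Hb1 : forall x, le 0 x ->
  (exists c, b x = c * alpha x 1) /\ (exists c, b (- x) = alpha x 1 * c).
Hypothesis na0 : 0 <= na.
Hypothesis nb0 : 0 <= nb.
Hypothesis naB : forall F, uniq F -> \sum_(i <- F) nrm (a i) <= na.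
Hypothesis nbB : forall F, uniq F -> \sum_(i <- F) nrm (b i) <= nb.

Definition W (q : G * G) := nrm (a q.1) * nrm (b q.2).

Lemma W_ge0 q : 0 <= W q.
Proof. by rewrite /W mulr_ge0 ?nrm_ge0. Qed.

Lemma pair_bound T : uniq T -> \sum_(q <- T) W q <= na * nb.
Proof.
move=> uT.
pose U1 := undup (map fst T); pose U2 := undup (map snd T).
pose Pp := [seq (x, y) | x <- U1, y <- U2].
have uP : uniq Pp.
  apply: allpairs_uniq; rewrite ?undup_uniq //.
  by move=> [x1 y1] [x2 y2].
have sTP : {subset T <= Pp}.
  move=> [x y] xyT; apply: (allpairs_f pair); rewrite mem_undup.
    by apply/mapP; exists (x, y).
  by apply/mapP; exists (x, y).
have h1 : \sum_(q <- T) W q <= \sum_(q <- Pp) W q.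
  rewrite (@sum_split _ _ Pp T W uP uT sTP) lerDl.
  by apply: sumr_ge0 => i _; exact: W_ge0.
apply: le_trans h1 _.
have -> : \sum_(q <- Pp) W q = (\sum_(x <- U1) nrm (a x)) * (\sum_(y <- U2) nrm (b y)).
  rewrite /Pp big_allpairs /W big_distrl /=; apply: eq_bigr => x _.
  by rewrite big_distrr.
apply: ler_pM.
- by apply: sumr_ge0 => i _; exact: nrm_ge0.
- by apply: sumr_ge0 => i _; exact: nrm_ge0.
- exact: naB (undup_uniq _).
- exact: nbB (undup_uniq _).
Qed.


Lemma series_gen (P : G * G -> Prop) (ser : G * G -> A) (phi : G * G -> G * G) :
  injective phi -> (forall p, P p -> nrm (ser p) <= W (phi p)) ->
  Defs.summable nrm P ser /\
  (forall e, 0 < e -> exists F, [/\ uniq F, (forall p, p \in F -> P p) &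
     nrm (fsum nrm P ser) <= \sum_(q <- map phi F) W q + e]).
Proof.
move=> iphi hb.
have sm : Defs.summable nrm P ser.
  apply: (summable_abs (fun p => W (phi p)) (na * nb)) => //.
  move=> F uF PF; rewrite -(big_map phi xpredT W); apply: pair_bound.
  by rewrite map_inj_uniq.
split => // e e0.
have [F [uF PF hF]] := has_sum_nrm (fsum_has sm) _ e0.
exists F; split => //; apply: le_trans hF _; rewrite lerD2r big_map.
by apply: sum_le_seq => p /PF; exact: hb.
Qed.

Definition phi1 (p : G * G) := (p.1, - p.2).
Definition phi2 (p : G * G) := (- p.1, p.2).
Definition phi6 (p : G * G) := (- p.1, - p.2).

Lemma phi1_inj : injective phi1.
Proof. by move=> [x1 y1] [x2 y2] [-> /oppr_inj ->]. Qed.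
Lemma phi2_inj : injective phi2.
Proof. by move=> [x1 y1] [x2 y2] [/oppr_inj -> ->]. Qed.
Lemma phi6_inj : injective phi6.
Proof. by move=> [x1 y1] [x2 y2] [/oppr_inj -> /oppr_inj ->]. Qed.

Lemma nrm_prod (x y : A) (u v : R) : nrm x <= u -> nrm y <= v -> nrm (x * y) <= u * v.
Proof.
move=> hx hy; apply: le_trans (nrmM _ _) _; apply: ler_pM => //; exact: nrm_ge0.
Qed.

Lemma bnd1 g (hg : le 0 g) p : dom1 le g p -> nrm (ser1 alpha a b p) <= W (phi1 p).
Proof.
case: p => x y [hx hy /= e]; rewrite /ser1 /W /= -e.
by apply: nrm_prod => //; exact: a_contr.
Qed.

Lemma bnd2 g p : dom2 le g p -> nrm (ser2 L a b p) <= W (phi2 p).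
Proof.
case: p => x y [[hx _] hy /= e]; rewrite /ser2 /W /=.
by apply: le_trans (L_contr _ _ hx) _; apply: nrm_prod.
Qed.

Lemma bnd3 g p : dom3 le g p -> nrm (ser3 alpha a b p) <= W p.
Proof.
case: p => x y [hx hy /= e]; rewrite /ser3 /W /=.
by apply: nrm_prod => //; exact: a_contr.
Qed.

Lemma bnd4 g (hg : ~ le 0 g) p : dom1 le g p -> nrm (ser4 alpha a b p) <= W (phi1 p).
Proof.
case: p => x y [hx hy /= e]; rewrite /ser4 /W /=.
have [hg' _] := not_le0 _ hg.
have -> : y - x = - g by rewrite e opprB.
by apply: nrm_prod => //; exact: a_contr.
Qed.

Lemma bnd5 g p : dom2 le g p -> nrm (ser5 L a b p) <= W (phi2 p).
Proof.
case: p => x y [hx [hy _] /= e]; rewrite /ser5 /W /=.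
by apply: le_trans (L_contr _ _ hy) _; apply: nrm_prod.
Qed.

Lemma bnd6 g p : dom6 le g p -> nrm (ser6 alpha a b p) <= W (phi6 p).
Proof.
case: p => x y [hx hy /= e]; rewrite /ser6 /W /=.
by apply: nrm_prod => //; exact: a_contr.
Qed.


Arguments series_gen {P ser phi}.
Lemma uniq_cat_disj (s t : seq (G * G)) : uniq s -> uniq t ->
  (forall q, q \in s -> q \in t -> False) -> uniq (s ++ t).
Proof.
move=> us ut d; rewrite cat_uniq us ut andbT /=; apply/hasPn => q qt.
by apply/negP => qs; exact: d qs qt.
Qed.

Lemma comb3 (x1 x2 x3 : A) (T1 T2 T3 : seq (G * G)) e :
  nrm x1 <= \sum_(q <- T1) W q + e / 3%:R ->
  nrm x2 <= \sum_(q <- T2) W q + e / 3%:R ->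
  nrm x3 <= \sum_(q <- T3) W q + e / 3%:R ->
  nrm (x1 + x2 + x3) <= \sum_(q <- T1 ++ T2 ++ T3) W q + e.
Proof.
move=> h1 h2 h3; rewrite !big_cat /=.
have := nrmD (x1 + x2) x3; have := nrmD x1 x2.
lra.
Qed.

Lemma approx g e : 0 < e -> exists T, [/\ uniq T, (forall q, q \in T -> q.1 + q.2 = g) &
  nrm (l1prod nrm le alpha L a b g) <= \sum_(q <- T) W q + e].
Proof.
move=> e0; have e3 : 0 < e / 3%:R by rewrite divr_gt0.
rewrite /l1prod; case: pselect => hg.
- have [_ h1] := series_gen phi1_inj (bnd1 _ hg).
  have [_ h2] := series_gen phi2_inj (bnd2 g).
  have [_ h3] := series_gen (@inj_id _) (bnd3 g).
  have [F1 [u1 P1 k1]] := h1 _ e3.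
  have [F2 [u2 P2 k2]] := h2 _ e3.
  have [F3 [u3 P3 k3]] := h3 _ e3.
  rewrite map_id in k3.
  exists (map phi1 F1 ++ map phi2 F2 ++ F3); split; last exact: comb3.
  + apply: uniq_cat_disj; first by rewrite map_inj_uniq //; exact: phi1_inj.
      apply: uniq_cat_disj => //; first by rewrite map_inj_uniq //; exact: phi2_inj.
      move=> q /mapP [[x y] /P2 [hx _ _] ->] /P3 [/= h _ _].
      exact: (gt_notneg _ hx h).
    move=> q /mapP [[x y] /P1 [hx hy _] ->]; rewrite mem_cat => /orP [].
      move=> /mapP [[x' y'] /P2 [hx' _ _]] [ex _].
      by apply: (gt_notneg _ hx') => /=; rewrite -ex; case: hx.
    by move=> /P3 [_ /= h _]; exact: (gt_notneg _ hy h).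
  + move=> q; rewrite !mem_cat => /or3P [].
    * by move=> /mapP [[x y] /P1 [_ _ /= ->] ->].
    * by move=> /mapP [[x y] /P2 [_ _ /= ->] ->]; rewrite addrC.
    * by move=> /P3 [_ _ ->].
- have [_ h1] := series_gen phi1_inj (bnd4 _ hg).
  have [_ h2] := series_gen phi2_inj (bnd5 g).
  have [_ h3] := series_gen phi6_inj (bnd6 g).
  have [F1 [u1 P1 k1]] := h1 _ e3.
  have [F2 [u2 P2 k2]] := h2 _ e3.
  have [F3 [u3 P3 k3]] := h3 _ e3.
  exists (map phi1 F1 ++ map phi2 F2 ++ map phi6 F3); split; last exact: comb3.
  + apply: uniq_cat_disj; first by rewrite map_inj_uniq //; exact: phi1_inj.
      apply: uniq_cat_disj; first by rewrite map_inj_uniq //; exact: phi2_inj.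
        by rewrite map_inj_uniq //; exact: phi6_inj.
      move=> q /mapP [[x y] /P2 [_ hy _] ->] /mapP [[x' y'] /P3 [_ hy' _]] [_ ey].
      by apply: (gt_notneg _ hy) => /=; rewrite ey opprK.
    move=> q /mapP [[x y] /P1 [hx hy _] ->]; rewrite mem_cat => /orP [].
      move=> /mapP [[x' y'] /P2 [hx' _ _]] [ex _].
      by apply: (gt_notneg _ hx') => /=; rewrite -ex; case: hx.
    move=> /mapP [[x' y'] /P3 [hx' _ _]] [ex _].
    by apply: (gt_notneg _ hx) => /=; rewrite ex opprK.
  + move=> q; rewrite !mem_cat => /or3P [].
    * by move=> /mapP [[x y] /P1 [_ _ /= ->] ->].
    * by move=> /mapP [[x y] /P2 [_ _ /= ->] ->]; rewrite addrC.
    * by move=> /mapP [[x y] /P3 [_ _ /= ->] ->].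
Qed.


Lemma ar x : le 0 x -> a x * alpha x 1 = a x.
Proof. by move=> hx; have [[c ->] _] := Ha1 _ hx; rewrite -mulrA (f1_idem (ea_endo HE hx)). Qed.
Lemma al x : le 0 x -> alpha x 1 * a (- x) = a (- x).
Proof. by move=> hx; have [_ [c ->]] := Ha1 _ hx; rewrite mulrA (f1_idem (ea_endo HE hx)). Qed.
Lemma br x : le 0 x -> b x * alpha x 1 = b x.
Proof. by move=> hx; have [[c ->] _] := Hb1 _ hx; rewrite -mulrA (f1_idem (ea_endo HE hx)). Qed.
Lemma bl x : le 0 x -> alpha x 1 * b (- x) = b (- x).
Proof. by move=> hx; have [_ [c ->]] := Hb1 _ hx; rewrite mulrA (f1_idem (ea_endo HE hx)). Qed.

Lemma conv_all : l1prod_series_converge nrm le alpha L a b.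
Proof.
move=> g; split => hg; split.
- exact: (series_gen phi1_inj (bnd1 _ hg)).1.
- exact: (series_gen phi2_inj (bnd2 g)).1.
- exact: (series_gen (@inj_id _) (bnd3 g)).1.
- exact: (series_gen phi1_inj (bnd4 _ hg)).1.
- exact: (series_gen phi2_inj (bnd5 g)).1.
- exact: (series_gen phi6_inj (bnd6 g)).1.
Qed.

Lemma r1 g (hg : le 0 g) p : dom1 le g p -> ser1 alpha a b p * alpha g 1 = ser1 alpha a b p.
Proof.
case: p => x y [hx hy /= e]; rewrite /ser1 /= -e -mulrA.
by rewrite -(f_mul (ea_endo HE hg)) mulr1.
Qed.

Lemma r2 g (hg : le 0 g) p : dom2 le g p -> ser2 L a b p * alpha g 1 = ser2 L a b p.
Proof.
case: p => x y [[hx _] [hy _] /= e]; rewrite /ser2 /= -(L_rmod _ _ _ hx).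
rewrite (ea_comp HE hx hg) (_ : x + g = y); last by rewrite e addrC subrK.
by rewrite -mulrA (br _ hy).
Qed.

Lemma r3 g (hg : le 0 g) p : dom3 le g p -> ser3 alpha a b p * alpha g 1 = ser3 alpha a b p.
Proof.
case: p => x y [hx hy /= e]; rewrite /ser3 /= e -(ea_comp HE hx hy) -mulrA.
by rewrite -(f_mul (ea_endo HE hx)) (br _ hy).
Qed.

Lemma l4 g (hg : ~ le 0 g) p : dom1 le g p -> alpha (- g) 1 * ser4 alpha a b p = ser4 alpha a b p.
Proof.
case: p => x y [hx hy /= e]; rewrite /ser4 /=.
have [hg' _] := not_le0 _ hg.
have -> : y - x = - g by rewrite e opprB.
by rewrite mulrA -(f_mul (ea_endo HE hg')) mul1r.
Qed.

Lemma l5 g (hg : ~ le 0 g) p : dom2 le g p -> alpha (- g) 1 * ser5 L a b p = ser5 L a b p.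
Proof.
case: p => x y [[hx _] [hy _] /= e]; rewrite /ser5 /=.
have [hg' _] := not_le0 _ hg.
rewrite -(ta_module HL hy) (ea_comp HE hy hg') (_ : y + - g = x); last first.
  by rewrite e opprB addrC subrK.
by rewrite mulrA (al _ hx).
Qed.

Lemma l6 g (hg : ~ le 0 g) p : dom6 le g p -> alpha (- g) 1 * ser6 alpha a b p = ser6 alpha a b p.
Proof.
case: p => x y [hx hy /= e]; rewrite /ser6 /=.
have -> : - g = y + x by rewrite e opprB opprK addrC.
by rewrite -(ea_comp HE hy hx) mulrA -(f_mul (ea_endo HE hy)) (al _ hx).
Qed.

Lemma l1prod_pos g : le 0 g -> l1prod nrm le alpha L a b g =
    fsum nrm (dom1 le g) (ser1 alpha a b)
    + fsum nrm (dom2 le g) (ser2 L a b)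
    + fsum nrm (dom3 le g) (ser3 alpha a b).
Proof. by move=> hg; rewrite /l1prod; case: pselect. Qed.

Lemma l1prod_neg g : ~ le 0 g -> l1prod nrm le alpha L a b g =
    fsum nrm (dom1 le g) (ser4 alpha a b)
    + fsum nrm (dom2 le g) (ser5 L a b)
    + fsum nrm (dom6 le g) (ser6 alpha a b).
Proof. by move=> hg; rewrite /l1prod; case: pselect. Qed.

Lemma proj_ok x : le 0 x ->
  (exists c, l1prod nrm le alpha L a b x = c * alpha x 1) /\
  (exists c, l1prod nrm le alpha L a b (- x) = alpha x 1 * c).
Proof.
move=> hx; have p1 := f1_nrm (ea_endo HE hx).
split.
  exists (l1prod nrm le alpha L a b x); rewrite (l1prod_pos _ hx).
  have [cp _] := conv_all x; have [c10 c20 c30] := cp hx.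
  rewrite !mulrDl (has_sum_rproj p1 (r1 _ hx) (fsum_has c10)).
  rewrite (has_sum_rproj p1 (r2 _ hx) (fsum_has c20)).
  by rewrite (has_sum_rproj p1 (r3 _ hx) (fsum_has c30)).
have [x0|x0] := eqVneq x 0.
  exists (l1prod nrm le alpha L a b (- x)).
  by rewrite x0 (ea_zero HE) mul1r.
have nx : ~ le 0 (- x) by move=> h; move: x0; rewrite (le_neg _ hx h) eqxx.
exists (l1prod nrm le alpha L a b (- x)); rewrite (l1prod_neg _ nx).
have [_ cn] := conv_all (- x); have [c10 c20 c30] := cn nx.
have q := l4 _ nx; rewrite opprK in q.
have q5 := l5 _ nx; rewrite opprK in q5.
have q6 := l6 _ nx; rewrite opprK in q6.
rewrite !mulrDr (has_sum_lproj p1 q (fsum_has c10)).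
rewrite (has_sum_lproj p1 q5 (fsum_has c20)).
by rewrite (has_sum_lproj p1 q6 (fsum_has c30)).
Qed.


Lemma fin_prod S : uniq S ->
  \sum_(g <- S) nrm (l1prod nrm le alpha L a b g) <= na * nb.
Proof.
move=> uS; apply: (small_le _ _ (size S)%:R); first exact: ler0n.
move=> e e0.
have claim : forall S, uniq S -> exists T, [/\ uniq T, (forall q, q \in T -> q.1 + q.2 \in S) &
    \sum_(g <- S) nrm (l1prod nrm le alpha L a b g) <= \sum_(q <- T) W q + (size S)%:R * e].
  elim=> [|g S' IH] /=.
    by move=> _; exists [::]; split => //; rewrite !big_nil mul0r addr0.
  case/andP => gS uS'; have [T' [uT' sT' hT']] := IH uS'.
  have [Tg [uTg sTg hTg]] := approx g _ e0.
  exists (Tg ++ T'); split.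
  - rewrite cat_uniq uTg uT' andbT /=; apply/hasPn => q /sT' qS.
    by apply/negP => /sTg qg; move: gS; rewrite -qg qS.
  - move=> q; rewrite mem_cat in_cons => /orP [/sTg ->|/sT' ->]; first by rewrite eqxx.
    by rewrite orbT.
  - rewrite big_cons big_cat /= -natr1 mulrDl mul1r.
    move: hTg hT'; lra.
have [T [uT _ hT]] := claim S uS.
apply: le_trans hT _; rewrite lerD2r; exact: pair_bound.
Qed.

Lemma main_in : l1norm nrm a = na%:E -> l1norm nrm b = nb%:E ->
  [/\ l1prod_series_converge nrm le alpha L a b,
      in_l1 nrm le alpha (l1prod nrm le alpha L a b) &
      (l1norm nrm (l1prod nrm le alpha L a b) <= l1norm nrm a * l1norm nrm b)%E].
Proof.
move=> ea eb.
have hn : (l1norm nrm (l1prod nrm le alpha L a b) <= (na * nb)%:E)%E.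
  rewrite /l1norm /esum; apply: ereal.ge_ereal_sup => _ [X [finX _] <-].
  rewrite fsbig_finite //= sumEFin lee_fin; apply: fin_prod.
  exact: finmap.fset_uniq.
split.
- exact: conv_all.
- split; first exact: proj_ok.
  by apply: le_lt_trans hn _; exact: ltry.
- by rewrite ea eb -EFinM.
Qed.

End Main.
End CStar.

Theorem proposition4p2 (R : realType) (A : algType R[i]) (nrm : A -> R)
  (star : A -> A) (G : zmodType) (le : rel G) (alpha L : G -> A -> A) :
  is_cstar nrm star ->
  is_toag le ->
  is_endo_action star le alpha ->
  is_transfer_action nrm star le alpha L ->
  forall a b : G -> A,
    in_l1 nrm le alpha a -> in_l1 nrm le alpha b ->
    [/\ l1prod_series_converge nrm le alpha L a b,
        in_l1 nrm le alpha (l1prod nrm le alpha L a b) &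
        (l1norm nrm (l1prod nrm le alpha L a b) <= l1norm nrm a * l1norm nrm b)%E].
Proof.
move=> HC HT HE HL a b [Ha1 Ha2] [Hb1 Hb2].
have [na [_ ea naB]] := l1_fin _ _ _ _ HC _ _ Ha2.
have [nb [_ eb nbB]] := l1_fin _ _ _ _ HC _ _ Hb2.
exact: (main_in _ _ _ _ HC _ _ _ _ HT HE HL _ _ _ _ Ha1 Hb1 naB nbB ea eb).
Qed.
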